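(* Let $\mathbf{A}\in\mathcal{PCM}_n$ be a double perturbed pairwise comparison matrix. Then its principal right eigenvector $\mathbf{w}^{EM}$ is efficient.
   Context: A pairwise comparison matrix (PCM) of size $n\times n$ is a matrix $\mathbf{A}=[a_{ij}]$ with $a_{ij}>0$ and $a_{ij}=1/a_{ji}$ for all $i,j$; the set of these is $\mathcal{PCM}_n$. A PCM is consistent if $a_{ik}a_{kj}=a_{ij}$ for all $i,j,k$. A PCM is double perturbed if it differs from a consistent PCM in two elements and their reciprocals, i.e. it can be made consistent by altering two entries (and their reciprocal entries). The principal right eigenvector $\mathbf{w}^{EM}$ is the positive (Perron) eigenvector: $\mathbf{A}\mathbf{w}^{EM}=\lambda_{\max}\mathbf{w}^{EM}$, $\lambda_{\max}$ the Perron eigenvalue. A positive weight vector $\mathbf{w}=(w_1,\dots,w_n)^T$ is efficient if there is no other positive vector $\mathbf{w}'$ with $|a_{ij}-w'_i/w'_j|\le |a_{ij}-w_i/w_j|$ for all $i,j$ and $|a_{k\ell}-w'_k/w'_\ell|< |a_{k\ell}-w_k/w_\ell|$ for some $k,\ell$. *)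

(* Defs.v *)
From HB Require Import structures.
From mathcomp Require Import all_boot all_order all_algebra.
Set Implicit Arguments. Unset Strict Implicit. Unset Printing Implicit Defensive.
Import Order.TTheory GRing.Theory Num.Theory.
Local Open Scope ring_scope.

Definition is_PCM (R : realFieldType) (n : nat) (A : 'M[R]_n) : Prop :=
  forall i j, 0 < A i j /\ A i j = (A j i)^-1.

Definition consistent (R : realFieldType) (n : nat) (A : 'M[R]_n) : Prop :=
  forall i j k, A i k * A k j = A i j.

Definition double_perturbed (R : realFieldType) (n : nat) (A : 'M[R]_n) : Prop :=
  exists B : 'M[R]_n, is_PCM B /\ consistent B /\
  exists i1 j1 i2 j2 : 'I_n,
    [/\ i1 != j1, i2 != j2,
        ~ ((i1 == i2) && (j1 == j2) || (i1 == j2) && (j1 == i2)),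
        A i1 j1 != B i1 j1 & A i2 j2 != B i2 j2] /\
        forall i j, A i j != B i j ->
          [\/ (i == i1) && (j == j1), (i == j1) && (j == i1),
              (i == i2) && (j == j2) | (i == j2) && (j == i2)].

Definition positive_vec (R : realFieldType) (n : nat) (w : 'cV[R]_n) : Prop :=
  forall i, 0 < w i 0.

Definition real_eigenvalue (R : realFieldType) (n : nat) (A : 'M[R]_n) (mu : R) : Prop :=
  exists v : 'cV[R]_n, v != 0 /\ A *m v = mu *: v.

Definition principal_eigenvector (R : realFieldType) (n : nat) (A : 'M[R]_n)
  (w : 'cV[R]_n) : Prop :=
  positive_vec w /\
  exists lam : R, A *m w = lam *: w /\
    forall mu, real_eigenvalue A mu -> mu <= lam.

Definition efficient (R : realFieldType) (n : nat) (A : 'M[R]_n) (w : 'cV[R]_n) : Prop :=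
  positive_vec w /\
  ~ exists w' : 'cV[R]_n, positive_vec w' /\
      (forall i j, `|A i j - w' i 0 / w' j 0| <= `|A i j - w i 0 / w j 0|) /\
      (exists k l, `|A k l - w' k 0 / w' l 0| < `|A k l - w k 0 / w l 0|).

(* Main.v *)
From HB Require Import structures.
Require Import Defs.
From mathcomp Require Import all_boot all_order all_algebra.
From mathcomp Require Import ring lra.
Set Implicit Arguments. Unset Strict Implicit. Unset Printing Implicit Defensive.
Import Order.TTheory GRing.Theory Num.Theory.
Local Open Scope ring_scope.


Definition strongF {R : realFieldType} {n : nat} (E : 'I_n -> 'I_n -> R) (u : 'I_n -> R) :=
  forall r : 'I_n -> R, (forall i j, E i j <= u i / u j -> r i <= r j) ->
  forall i j, r i <= r j.

Lemma sum_ex1 {R : realFieldType} {n : nat} (f : 'I_n -> R) a : (forall j, j != a -> f j = 0) ->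
  \sum_j f j = f a.
Proof. move=> H; rewrite (bigD1 a) //= big1 ?addr0 // => j /H //. Qed.

Lemma sum_ex2 {R : realFieldType} {n : nat} (f : 'I_n -> R) a b : a != b ->
  (forall j, j != a -> j != b -> f j = 0) -> \sum_j f j = f a + f b.
Proof.
move=> ab H; rewrite (bigD1 a) //= (bigD1 b) /=; last by rewrite eq_sym.
rewrite big1 ?addr0 // => j /andP[ja jb]; exact: H.
Qed.

Lemma sum_ex0 {R : realFieldType} {n : nat} (f : 'I_n -> R) : (forall j, f j = 0) -> \sum_j f j = 0.
Proof. by move=> H; rewrite big1. Qed.

Lemma arcP {R : realFieldType} {n : nat} (E : 'I_n -> 'I_n -> R) (u : 'I_n -> R) i j :
  0 < u j -> E i j * u j <= u i -> E i j <= u i / u j.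
Proof. by move=> uj; rewrite ler_pdivlMr. Qed.

Lemma rowsum {R : realFieldType} {n : nat} (E : 'I_n -> 'I_n -> R) (u : 'I_n -> R) i :
  \sum_j E i j * u j = \sum_j u j + \sum_j (E i j - 1) * u j.
Proof. rewrite -big_split /=; apply: eq_bigr => j _; ring. Qed.

Lemma sum3 {R : realFieldType} {n : nat} (u : 'I_n -> R) c p q : c != p -> c != q -> p != q ->
  \sum_j u j = u c + u p + u q +
     \sum_(j | (j != c) && (j != p) && (j != q)) u j.
Proof.
move=> cp cq pq; rewrite (bigD1 c) //= (bigD1 p) /=; last by rewrite eq_sym.
rewrite (bigD1 q) /=; last by rewrite eq_sym (eq_sym q) cq.
rewrite !addrA; congr (_ + _); apply: eq_bigl => j; by rewrite andbA.
Qed.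

Lemma sum4 {R : realFieldType} {n : nat} (u : 'I_n -> R) c p q t : c != p -> c != q -> p != q ->
  t != c -> t != p -> t != q ->
  \sum_j u j = u c + u p + u q + u t +
     \sum_(j | (j != c) && (j != p) && (j != q) && (j != t)) u j.
Proof.
move=> cp cq pq tc tp tq; rewrite (sum3 u cp cq pq) (bigD1 t) /=; last by rewrite tc tp tq.
by rewrite !addrA.
Qed.

Lemma sgnL {R : realFieldType} (lam d D : R) : 0 < lam -> lam * d = D -> 0 <= D -> 0 <= d.
Proof. move=> *; nra. Qed.

Lemma coreB1 {R : realFieldType} {n : nat} (E : 'I_n -> 'I_n -> R) (u : 'I_n -> R) lam c p q :
  (forall i, 0 < u i) -> (forall i j, 0 < E i j) ->
  (forall i j, E i j = (E j i)^-1) ->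
  (forall i, \sum_j E i j * u j = lam * u i) ->
  c != p -> c != q -> p != q ->
  (forall i j, ~~ [|| (i==c)&&(j==p), (i==p)&&(j==c), (i==c)&&(j==q) | (i==q)&&(j==c)] -> E i j = 1) ->
  E c p != 1 -> E c q != 1 -> E c p <= E c q -> strongF E u.
Proof.
move=> upos Epos Erec eig cp cq pq hE x1 y1 xy.
have cpF : (c == p) = false by apply/negbTE.
have cqF : (c == q) = false by apply/negbTE.
have pqF : (p == q) = false by apply/negbTE.
have pcF : (p == c) = false by rewrite eq_sym.
have qcF : (q == c) = false by rewrite eq_sym.
have qpF : (q == p) = false by rewrite eq_sym.
set x := E c p; set y := E c q.
have x0 : 0 < x by apply: Epos.
have y0 : 0 < y by apply: Epos.
have Epc : E p c = x^-1 by apply: Erec.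
have Eqc : E q c = y^-1 by apply: Erec.
set s := \sum_j u j.
set P := fun j => (j != c) && (j != p) && (j != q).
set Rr := \sum_(j | P j) u j.
have hs : s = u c + u p + u q + Rr by rewrite /s (sum3 u cp cq pq).
have Rr0 : 0 <= Rr by apply: sumr_ge0 => j _; apply: ltW.
have lam0 : 0 < lam.
  have := eig c; rewrite (bigD1 c) //= => H.
  have h1 : 0 < E c c * u c by rewrite mulr_gt0.
  have h2 : 0 <= \sum_(j | j != c) E c j * u j by apply: sumr_ge0 => j _; rewrite mulr_ge0 // ltW.
  have := upos c; nra.
have ec : lam * u c = s + (x - 1) * u p + (y - 1) * u q.
  rewrite -eig rowsum (sum_ex2 (f := fun j => (E c j - 1) * u j) pq) ?addrA // => j jp jq.
  by rewrite hE ?subrr ?mul0r //= !eqxx cpF cqF (negbTE jp) (negbTE jq).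
have ep : lam * u p = s + (x^-1 - 1) * u c.
  rewrite -eig rowsum (sum_ex1 (f := fun j => (E p j - 1) * u j) (a := c)) ?Epc // => j jc.
  by rewrite hE ?subrr ?mul0r //= !eqxx pcF pqF (negbTE jc) !andbF.
have eq : lam * u q = s + (y^-1 - 1) * u c.
  rewrite -eig rowsum (sum_ex1 (f := fun j => (E q j - 1) * u j) (a := c)) ?Eqc // => j jc.
  by rewrite hE ?subrr ?mul0r //= !eqxx qcF qpF (negbTE jc) !andbF.
have ek : forall i, P i -> lam * u i = s.
  move=> i /andP[/andP[ic ip] iq].
  rewrite -eig rowsum (sum_ex0 (f := fun j => (E i j - 1) * u j)) ?addr0 // => j.
  by rewrite hE ?subrr ?mul0r //= (negbTE ic) (negbTE ip) (negbTE iq).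
have xx : x * x^-1 = 1 by rewrite mulfV // gt_eqF.
have yy : y * y^-1 = 1 by rewrite mulfV // gt_eqF.
have F1 : lam * (u c - x * u p) = (y - x) * u q + (1 - x) * Rr.
  have ep' : x * (lam * u p) = x * s + (1 - x) * u c.
    by rewrite ep; transitivity (x * s + (x * x^-1 - x) * u c); [ring | rewrite xx].
  rewrite hs in ec ep'; lra.
have F2 : lam * (u c - y * u q) = (x - y) * u p + (1 - y) * Rr.
  have eq' : y * (lam * u q) = y * s + (1 - y) * u c.
    by rewrite eq; transitivity (y * s + (y * y^-1 - y) * u c); [ring | rewrite yy].
  rewrite hs in ec eq'; lra.
have F3 : lam * (u p - u q) = (x^-1 - y^-1) * u c by lra.
have F4 : forall i, P i -> lam * (u p - u i) = (x^-1 - 1) * u c.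
  by move=> i /ek; lra.
have F5 : forall i, P i -> lam * (u q - u i) = (y^-1 - 1) * u c.
  by move=> i /ek; lra.
have F6 : forall i, P i -> lam * (u c - u i) = (x - 1) * u p + (y - 1) * u q.
  by move=> i /ek; lra.
have Epq : E p q = 1 by rewrite hE //= ?eqxx ?qcF ?qpF ?pcF ?pqF ?cpF ?cqF ?andbF.
have Eqp : E q p = 1 by rewrite hE //= ?eqxx ?qcF ?qpF ?pcF ?pqF ?cpF ?cqF ?andbF.
have EiU : forall i j, P i -> E i j = 1.
  move=> i j /andP[/andP[ic ip] iq].
  by rewrite hE //= (negbTE ic) (negbTE ip) (negbTE iq).
have EUi : forall i j, P i -> E j i = 1.
  move=> i j /andP[/andP[ic ip] iq].
  by rewrite hE //= (negbTE ic) (negbTE ip) (negbTE iq) !andbF.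
have xV : 0 < x^-1 by rewrite invr_gt0.
have yV : 0 < y^-1 by rewrite invr_gt0.
have xyV : y^-1 <= x^-1 by rewrite lef_pV2 // posrE.
move=> r Hr.
have arc1 : forall i j, P i -> u j <= u i -> r i <= r j.
  move=> i j Pi h; apply: Hr; apply: arcP => //; by rewrite EiU // mul1r.
have arc2 : forall i j, P j -> u j <= u i -> r i <= r j.
  move=> i j Pj h; apply: Hr; apply: arcP => //; by rewrite EUi // mul1r.
have cp_arc : x * u p <= u c -> r c <= r p.
  by move=> h; apply: Hr; apply: arcP.
have pc_arc : u c <= x * u p -> r p <= r c.
  move=> h; apply: Hr; apply: arcP => //; rewrite Epc.
  by rewrite ler_pdivrMl // mulrC.
have qc_arc : u c <= y * u q -> r q <= r c.
  move=> h; apply: Hr; apply: arcP => //; rewrite Eqc.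
  by rewrite ler_pdivrMl // mulrC.
have pq_arc : u q <= u p -> r p <= r q.
  by move=> h; apply: Hr; apply: arcP => //; rewrite Epq mul1r.
have key : r c = r p /\ r c = r q /\ forall i, P i -> r i = r c.
  have [ylt1|y1gt] : y < 1 \/ 1 < y.
    by case: (ltgtP y 1) => h; [left|right|move: y1; rewrite -/y h eqxx].
  -
    have xlt1 : x < 1 by apply: le_lt_trans ylt1.
    have yV1 : 1 < y^-1 by rewrite invf_gt1.
    have xV1 : 1 < x^-1 by rewrite invf_gt1.
    have h1 : r c <= r p.
      apply: cp_arc; rewrite -subr_ge0; apply: sgnL lam0 F1 _.
      by rewrite addr_ge0 // mulr_ge0 // ?subr_ge0 // ltW // ?upos.
    have h2 : r p <= r q.
      apply: pq_arc; rewrite -subr_ge0; apply: sgnL lam0 F3 _.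
      by rewrite mulr_ge0 ?subr_ge0 // ltW.
    have hqi : forall i, P i -> r q <= r i.
      move=> i Pi; apply: arc2 => //; rewrite -subr_ge0; apply: sgnL lam0 (F5 i Pi) _.
      by rewrite mulr_ge0 ?subr_ge0 // ltW.
    have hic : forall i, P i -> r i <= r c.
      move=> i Pi; apply: arc1 => //; rewrite -subr_ge0; apply: (sgnL lam0 (d := u i - u c) (D := (1 - x) * u p + (1 - y) * u q)).
        by have := F6 i Pi; lra.
      by rewrite addr_ge0 // mulr_ge0 // ?subr_ge0 ltW.
    have h3 : r q <= r c.
      case: (boolP [exists k, P k]) => [/existsP[k Pk]|nok].
        by apply: le_trans (hqi k Pk) (hic k Pk).
      have R0 : Rr = 0.
        rewrite /Rr big_pred0 // => j; apply/negbTE; apply: contra nok => Pj.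
        by apply/existsP; exists j.
      apply: qc_arc; rewrite -subr_ge0; apply: (sgnL lam0 (d := y * u q - u c) (D := (y - x) * u p)).
        by move: F2; rewrite R0; lra.
      by rewrite mulr_ge0 ?subr_ge0 // ltW.
    split; [|split]; first by apply/eqP; rewrite eq_le h1 (le_trans h2 h3).
      by apply/eqP; rewrite eq_le h3 (le_trans h1 h2).
    move=> i Pi; apply/eqP; rewrite eq_le hic //=.
    by apply: le_trans (hqi i Pi); apply: le_trans h2.
  have [xlt1|x1gt] : x < 1 \/ 1 < x.
    by case: (ltgtP x 1) => h; [left|right|move: x1; rewrite -/x h eqxx].
  -
    have yV1 : y^-1 < 1 by rewrite invf_lt1.
    have xV1 : 1 < x^-1 by rewrite invf_gt1.
    have h1 : r c <= r p.
      apply: cp_arc; rewrite -subr_ge0; apply: sgnL lam0 F1 _.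
      by rewrite addr_ge0 // mulr_ge0 // ?subr_ge0 // ltW // ?upos // (lt_trans xlt1).
    have h2 : r p <= r q.
      apply: pq_arc; rewrite -subr_ge0; apply: sgnL lam0 F3 _.
      by rewrite mulr_ge0 ?subr_ge0 // ltW.
    have h3 : r q <= r c.
      apply: qc_arc; rewrite -subr_ge0; apply: (sgnL lam0 (d := y * u q - u c) (D := (y - x) * u p + (y - 1) * Rr)).
        by move: F2; lra.
      by rewrite addr_ge0 // mulr_ge0 // ?subr_ge0 // ltW // ?upos // (lt_trans xlt1).
    have hpi : forall i, P i -> r p <= r i.
      move=> i Pi; apply: arc2 => //; rewrite -subr_ge0; apply: sgnL lam0 (F4 i Pi) _.
      by rewrite mulr_ge0 ?subr_ge0 // ltW.
    have hiq : forall i, P i -> r i <= r q.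
      move=> i Pi; apply: arc1 => //; rewrite -subr_ge0; apply: (sgnL lam0 (d := u i - u q) (D := (1 - y^-1) * u c)).
        by have := F5 i Pi; lra.
      by rewrite mulr_ge0 ?subr_ge0 // ltW.
    split; [|split]; first by apply/eqP; rewrite eq_le h1 (le_trans h2 h3).
      by apply/eqP; rewrite eq_le h3 (le_trans h1 h2).
    move=> i Pi; apply/eqP; rewrite eq_le (le_trans (hiq i Pi) h3) /=.
    by apply: le_trans (hpi i Pi).
  -
    have yV1 : y^-1 < 1 by rewrite invf_lt1 // (lt_le_trans x1gt).
    have xV1 : x^-1 < 1 by rewrite invf_lt1.
    have ygt1 : 1 < y by apply: lt_le_trans xy.
    have h2 : r p <= r q.
      apply: pq_arc; rewrite -subr_ge0; apply: sgnL lam0 F3 _.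
      by rewrite mulr_ge0 ?subr_ge0 // ltW.
    have h3 : r q <= r c.
      apply: qc_arc; rewrite -subr_ge0; apply: (sgnL lam0 (d := y * u q - u c) (D := (y - x) * u p + (y - 1) * Rr)).
        by move: F2; lra.
      by rewrite addr_ge0 // mulr_ge0 // ?subr_ge0 // ltW // ?upos.
    have hci : forall i, P i -> r c <= r i.
      move=> i Pi; apply: arc2 => //; rewrite -subr_ge0; apply: (sgnL lam0 (d := u c - u i) (D := (x - 1) * u p + (y - 1) * u q)).
        by apply: F6.
      by rewrite addr_ge0 // mulr_ge0 // ?subr_ge0 // ltW.
    have hip : forall i, P i -> r i <= r p.
      move=> i Pi; apply: arc1 => //; rewrite -subr_ge0; apply: (sgnL lam0 (d := u i - u p) (D := (1 - x^-1) * u c)).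
        by have := F4 i Pi; lra.
      by rewrite mulr_ge0 ?subr_ge0 // ltW.
    have h1 : r c <= r p.
      case: (boolP [exists k, P k]) => [/existsP[k Pk]|nok].
        by apply: le_trans (hci k Pk) (hip k Pk).
      have R0 : Rr = 0.
        rewrite /Rr big_pred0 // => j; apply/negbTE; apply: contra nok => Pj.
        by apply/existsP; exists j.
      apply: cp_arc; rewrite -subr_ge0; apply: sgnL lam0 F1 _.
      by rewrite R0 mulr0 addr0 mulr_ge0 ?subr_ge0 // ltW.
    split; [|split]; first by apply/eqP; rewrite eq_le h1 (le_trans h2 h3).
      by apply/eqP; rewrite eq_le h3 (le_trans h1 h2).
    move=> i Pi; apply/eqP; rewrite eq_le (le_trans (hip i Pi) (le_trans h2 h3)) /=.
    exact: hci.
case: key => ecp [ecq eci].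
have all : forall i, r i = r c.
  move=> i; case: (boolP (P i)) => [Pi|]; first exact: eci.
  rewrite /P negb_and negb_and !negbK => /orP[/orP[]|] /eqP -> //.
move=> i j; by rewrite (all i) (all j).
Qed.

Lemma coreB {R : realFieldType} {n : nat} (E : 'I_n -> 'I_n -> R) (u : 'I_n -> R) lam c p q :
  (forall i, 0 < u i) -> (forall i j, 0 < E i j) ->
  (forall i j, E i j = (E j i)^-1) ->
  (forall i, \sum_j E i j * u j = lam * u i) ->
  c != p -> c != q -> p != q ->
  (forall i j, ~~ [|| (i==c)&&(j==p), (i==p)&&(j==c), (i==c)&&(j==q) | (i==q)&&(j==c)] -> E i j = 1) ->
  E c p != 1 -> E c q != 1 -> strongF E u.
Proof.
move=> upos Epos Erec eig cp cq pq hE x1 y1.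
case/orP: (le_total (E c p) (E c q)) => xy.
  exact: (coreB1 upos Epos Erec eig cp cq pq hE).
apply: (coreB1 (p := q) (q := p) upos Epos Erec eig cq cp _ _ y1 x1 xy).
  by rewrite eq_sym.
move=> i j h; apply: hE; move: h.
by case: (i==c); case: (j==p); case: (i==p); case: (j==c); case: (i==q); case: (j==q).
Qed.

Lemma coreA1 {R : realFieldType} {n : nat} (E : 'I_n -> 'I_n -> R) (u : 'I_n -> R) lam p q r t :
  (forall i, 0 < u i) -> (forall i j, 0 < E i j) ->
  (forall i j, E i j = (E j i)^-1) ->
  (forall i, \sum_j E i j * u j = lam * u i) ->
  p != q -> p != r -> q != r -> t != p -> t != q -> t != r ->
  (forall i j, ~~ [|| (i==p)&&(j==q), (i==q)&&(j==p), (i==r)&&(j==t) | (i==t)&&(j==r)] -> E i j = 1) ->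
  1 < E p q -> 1 < E r t -> strongF E u.
Proof.
move=> upos Epos Erec eig pq pr qr tp tq tr hE x1 y1.
have pqF : (p == q) = false by apply/negbTE.
have prF : (p == r) = false by apply/negbTE.
have qrF : (q == r) = false by apply/negbTE.
have tpF : (t == p) = false by apply/negbTE.
have tqF : (t == q) = false by apply/negbTE.
have trF : (t == r) = false by apply/negbTE.
have qpF : (q == p) = false by rewrite eq_sym.
have rpF : (r == p) = false by rewrite eq_sym.
have rqF : (r == q) = false by rewrite eq_sym.
have ptF : (p == t) = false by rewrite eq_sym.
have qtF : (q == t) = false by rewrite eq_sym.
have rtF : (r == t) = false by rewrite eq_sym.
set x := E p q; set y := E r t.
have x0 : 0 < x by apply: Epos.
have y0 : 0 < y by apply: Epos.
have Eqp : E q p = x^-1 by apply: Erec.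
have Etr : E t r = y^-1 by apply: Erec.
set s := \sum_j u j.
set P := fun j => (j != p) && (j != q) && (j != r) && (j != t).
set Rr := \sum_(j | P j) u j.
have hs : s = u p + u q + u r + u t + Rr by rewrite /s (sum4 u pq pr qr tp tq tr).
have Rr0 : 0 <= Rr by apply: sumr_ge0 => j _; apply: ltW.
have lam0 : 0 < lam.
  have := eig p; rewrite (bigD1 p) //= => H.
  have h1 : 0 < E p p * u p by rewrite mulr_gt0.
  have h2 : 0 <= \sum_(j | j != p) E p j * u j by apply: sumr_ge0 => j _; rewrite mulr_ge0 // ltW.
  have := upos p; nra.
have ep : lam * u p = s + (x - 1) * u q.
  rewrite -eig rowsum (sum_ex1 (f := fun j => (E p j - 1) * u j) (a := q)) // => j jq.
  by rewrite hE ?subrr ?mul0r //= ?eqxx ?pqF ?prF ?qrF ?tpF ?tqF ?trF ?qpF ?rpF ?rqF ?ptF ?qtF ?rtF (negbTE jq) ?andbF.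
have eq : lam * u q = s + (x^-1 - 1) * u p.
  rewrite -eig rowsum (sum_ex1 (f := fun j => (E q j - 1) * u j) (a := p)) ?Eqp // => j jp.
  by rewrite hE ?subrr ?mul0r //= ?eqxx ?pqF ?prF ?qrF ?tpF ?tqF ?trF ?qpF ?rpF ?rqF ?ptF ?qtF ?rtF (negbTE jp) ?andbF.
have er : lam * u r = s + (y - 1) * u t.
  rewrite -eig rowsum (sum_ex1 (f := fun j => (E r j - 1) * u j) (a := t)) // => j jt.
  by rewrite hE ?subrr ?mul0r //= ?eqxx ?pqF ?prF ?qrF ?tpF ?tqF ?trF ?qpF ?rpF ?rqF ?ptF ?qtF ?rtF (negbTE jt) ?andbF.
have et : lam * u t = s + (y^-1 - 1) * u r.
  rewrite -eig rowsum (sum_ex1 (f := fun j => (E t j - 1) * u j) (a := r)) ?Etr // => j jr.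
  by rewrite hE ?subrr ?mul0r //= ?eqxx ?pqF ?prF ?qrF ?tpF ?tqF ?trF ?qpF ?rpF ?rqF ?ptF ?qtF ?rtF (negbTE jr) ?andbF.
have ek : forall i, P i -> lam * u i = s.
  move=> i /andP[/andP[/andP[ip iq] ir] it].
  rewrite -eig rowsum (sum_ex0 (f := fun j => (E i j - 1) * u j)) ?addr0 // => j.
  by rewrite hE ?subrr ?mul0r //= (negbTE ip) (negbTE iq) (negbTE ir) (negbTE it).
have xx : x * x^-1 = 1 by rewrite mulfV // gt_eqF.
have yy : y * y^-1 = 1 by rewrite mulfV // gt_eqF.
have eq' : x * (lam * u q) = x * s + (1 - x) * u p.
  by rewrite eq; transitivity (x * s + (x * x^-1 - x) * u p); [ring | rewrite xx].
have et' : y * (lam * u t) = y * s + (1 - y) * u r.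
  by rewrite et; transitivity (y * s + (y * y^-1 - y) * u r); [ring | rewrite yy].
have xV1 : x^-1 < 1 by rewrite invf_lt1.
have yV1 : y^-1 < 1 by rewrite invf_lt1.
have EU : forall i j, ~~ [|| (i==p)&&(j==q), (i==q)&&(j==p), (i==r)&&(j==t) | (i==t)&&(j==r)] -> E i j * u j <= u i -> E i j <= u i / u j.
  by move=> i j _; apply: arcP.
move=> rr Hr.
have arcU : forall i j, ~~ [|| (i==p)&&(j==q), (i==q)&&(j==p), (i==r)&&(j==t) | (i==t)&&(j==r)] -> u j <= u i -> rr i <= rr j.
  move=> i j h hu; apply: Hr; apply: arcP => //; by rewrite hE // mul1r.
have h1 : rr q <= rr p.
  apply: Hr; apply: arcP => //; rewrite Eqp ler_pdivrMl // -subr_ge0.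
  apply: (sgnL lam0 (d := x * u q - u p) (D := (x - 1) * (u r + u t + Rr))).
    by rewrite hs in ep eq'; lra.
  by rewrite mulr_ge0 ?subr_ge0 ?addr_ge0 // ltW.
have h2 : rr r <= rr t -> rr t <= rr r.
  move=> _; apply: Hr; apply: arcP => //; rewrite Etr ler_pdivrMl // -subr_ge0.
  apply: (sgnL lam0 (d := y * u t - u r) (D := (y - 1) * (u p + u q + Rr))).
    by rewrite hs in er et'; lra.
  by rewrite mulr_ge0 ?subr_ge0 ?addr_ge0 // ltW.
have h3 : rr p <= rr t.
  apply: arcU; first by rewrite /= ?eqxx ?pqF ?prF ?qrF ?tpF ?tqF ?trF ?qpF ?rpF ?rqF ?ptF ?qtF ?rtF.
  rewrite -subr_ge0; apply: (sgnL lam0 (d := u p - u t) (D := (x - 1) * u q + (1 - y^-1) * u r)).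
    by lra.
  by rewrite addr_ge0 // mulr_ge0 ?subr_ge0 // ltW.
have h4 : rr r <= rr q.
  apply: arcU; first by rewrite /= ?eqxx ?pqF ?prF ?qrF ?tpF ?tqF ?trF ?qpF ?rpF ?rqF ?ptF ?qtF ?rtF.
  rewrite -subr_ge0; apply: (sgnL lam0 (d := u r - u q) (D := (y - 1) * u t + (1 - x^-1) * u p)).
    by lra.
  by rewrite addr_ge0 // mulr_ge0 ?subr_ge0 // ltW.
have h5 : rr t <= rr r.
  apply: Hr; apply: arcP => //; rewrite Etr ler_pdivrMl // -subr_ge0.
  apply: (sgnL lam0 (d := y * u t - u r) (D := (y - 1) * (u p + u q + Rr))).
    by rewrite hs in er et'; lra.
  by rewrite mulr_ge0 ?subr_ge0 ?addr_ge0 // ltW.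
have hPi : forall i, P i -> rr p <= rr i /\ rr i <= rr q.
  move=> i Pi; have := Pi; move=> /andP[/andP[/andP[ip iq] ir] it].
  have nb : forall a, ~~ [|| (a==p)&&(i==q), (a==q)&&(i==p), (a==r)&&(i==t) | (a==t)&&(i==r)].
    by move=> a; rewrite (negbTE ip) (negbTE iq) (negbTE ir) (negbTE it) !andbF.
  have nb' : forall a, ~~ [|| (i==p)&&(a==q), (i==q)&&(a==p), (i==r)&&(a==t) | (i==t)&&(a==r)].
    by move=> a; rewrite (negbTE ip) (negbTE iq) (negbTE ir) (negbTE it).
  split.
    apply: arcU => //; rewrite -subr_ge0; apply: (sgnL lam0 (d := u p - u i) (D := (x - 1) * u q)).
      by have := ek i Pi; lra.
    by rewrite mulr_ge0 ?subr_ge0 // ltW.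
  apply: arcU => //; rewrite -subr_ge0; apply: (sgnL lam0 (d := u i - u q) (D := (1 - x^-1) * u p)).
    by have := ek i Pi; lra.
  by rewrite mulr_ge0 ?subr_ge0 // ltW.
have all : forall i, rr i = rr p.
  have ep1 : rr p <= rr q by apply: le_trans h3 (le_trans h5 h4).
  move=> i; case: (boolP (P i)) => [Pi|].
    by case: (hPi i Pi) => a b; apply/eqP; rewrite eq_le a (le_trans b h1).
  rewrite /P !negb_and !negbK => /orP[/orP[/orP[]|]|] /eqP ->.
  - by [].
  - by apply/eqP; rewrite eq_le h1.
  - apply/eqP; rewrite eq_le (le_trans h4 h1) /=. exact: le_trans h3 h5.
  - apply/eqP; rewrite eq_le h3 andbT. exact: le_trans h5 (le_trans h4 h1).
move=> i j; by rewrite (all i) (all j).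
Qed.

Lemma neq1_inv {R : realFieldType} {n : nat} (E : 'I_n -> 'I_n -> R) i j :
  (forall i j, E i j = (E j i)^-1) -> E j i != 1 -> E i j != 1.
Proof.
move=> Erec; rewrite (Erec i j); apply: contra => /eqP h.
by rewrite -[E j i]invrK h invr1.
Qed.

Lemma coreA2 {R : realFieldType} {n : nat} (E : 'I_n -> 'I_n -> R) (u : 'I_n -> R) lam p q r t :
  (forall i, 0 < u i) -> (forall i j, 0 < E i j) ->
  (forall i j, E i j = (E j i)^-1) ->
  (forall i, \sum_j E i j * u j = lam * u i) ->
  p != q -> p != r -> q != r -> t != p -> t != q -> t != r ->
  (forall i j, ~~ [|| (i==p)&&(j==q), (i==q)&&(j==p), (i==r)&&(j==t) | (i==t)&&(j==r)] -> E i j = 1) ->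
  1 < E p q -> E r t != 1 -> strongF E u.
Proof.
move=> upos Epos Erec eig pq pr qr tp tq tr hE x1 y1.
have [ylt|ygt] : E r t < 1 \/ 1 < E r t.
  by case: (ltgtP (E r t) 1) => h; [left|right|move: y1; rewrite h eqxx].
- apply: (coreA1 (r := t) (t := r) upos Epos Erec eig pq _ _ _ _ _ _ x1).
  all: try by rewrite eq_sym.
  + move=> i j h; apply: hE; move: h.
    by case: (i==p); case: (j==q); case: (i==q); case: (j==p); case: (i==r); case: (j==t); case: (i==t); case: (j==r).
  + by rewrite Erec invf_gt1 // Epos.
- exact: (coreA1 upos Epos Erec eig pq pr qr tp tq tr hE x1 ygt).
Qed.

Lemma coreA {R : realFieldType} {n : nat} (E : 'I_n -> 'I_n -> R) (u : 'I_n -> R) lam p q r t :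
  (forall i, 0 < u i) -> (forall i j, 0 < E i j) ->
  (forall i j, E i j = (E j i)^-1) ->
  (forall i, \sum_j E i j * u j = lam * u i) ->
  p != q -> p != r -> q != r -> t != p -> t != q -> t != r ->
  (forall i j, ~~ [|| (i==p)&&(j==q), (i==q)&&(j==p), (i==r)&&(j==t) | (i==t)&&(j==r)] -> E i j = 1) ->
  E p q != 1 -> E r t != 1 -> strongF E u.
Proof.
move=> upos Epos Erec eig pq pr qr tp tq tr hE x1 y1.
have [xlt|xgt] : E p q < 1 \/ 1 < E p q.
  by case: (ltgtP (E p q) 1) => h; [left|right|move: x1; rewrite h eqxx].
- apply: (coreA2 (p := q) (q := p) upos Epos Erec eig _ qr pr _ _ tr _ _ y1).
  all: try by rewrite eq_sym.
  all: try done.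
  + move=> i j h; apply: hE; move: h.
    by case: (i==p); case: (j==q); case: (i==q); case: (j==p); case: (i==r); case: (j==t); case: (i==t); case: (j==r).
  + by rewrite Erec invf_gt1 // Epos.
- exact: (coreA2 upos Epos Erec eig pq pr qr tp tq tr hE xgt y1).
Qed.

Lemma eff_strong {R : realFieldType} {n : nat} (A : 'M[R]_n) (w : 'cV[R]_n) :
  positive_vec w ->
  (forall r : 'I_n -> R, (forall i j, A i j <= w i 0 / w j 0 -> r i <= r j) ->
     forall i j, r i <= r j) -> efficient A w.
Proof.
move=> pw Hs; split => //; case=> w' [pw' [dom [k [l lt]]]].
pose r := fun i => w' i 0 / w i 0.
have hr : forall i j, A i j <= w i 0 / w j 0 -> r i <= r j.
  move=> i j h; have hd := dom i j.
  have zc : w' i 0 / w' j 0 <= w i 0 / w j 0.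
    have h1 : `|A i j - w i 0 / w j 0| = w i 0 / w j 0 - A i j.
      by rewrite distrC ger0_norm // subr_ge0.
    have h2 : w' i 0 / w' j 0 - A i j <= `|A i j - w' i 0 / w' j 0|.
      by rewrite distrC ler_norm.
    lra.
  move: zc; rewrite /r ler_pdivrMr // mulrAC ler_pdivlMr // => zc.
  by rewrite ler_pdivrMr // mulrAC ler_pdivlMr //; lra.
have req : r k = r l by apply/eqP; rewrite eq_le !(Hs r hr).
have ek : w' k 0 = r k * w k 0 by rewrite /r divfK // gt_eqF.
have el : w' l 0 = r l * w l 0 by rewrite /r divfK // gt_eqF.
have rk0 : 0 < r k by rewrite /r divr_gt0.
move: lt; rewrite ek el req.
have -> : r l * w k 0 / (r l * w l 0) = w k 0 / w l 0.
  by rewrite invfM mulrACA mulfV ?mul1r // gt_eqF // -req.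
by rewrite ltxx.
Qed.

Theorem theorem6 (R : realFieldType) (n : nat) (A : 'M[R]_n) (w : 'cV[R]_n) :
  is_PCM A -> double_perturbed A -> principal_eigenvector A w -> efficient A w.
Proof.
move=> hA [B [hB [cB [i1 [j1 [i2 [j2 [[n11 n22 ndup d1 d2] hdiff]]]]]]]] [pw [lam [eig _]]].
pose b := fun i => B i i1.
have b0 : forall i, 0 < b i by move=> i; case: (hB i i1).
have B0 : forall i j, 0 < B i j by move=> i j; case: (hB i j).
have A0 : forall i j, 0 < A i j by move=> i j; case: (hA i j).
have Bij : forall i j, B i j = b i / b j.
  by move=> i j; rewrite /b -(cB i j i1) (proj2 (hB i1 j)).
pose E := fun i j => A i j / B i j.
pose u := fun i => w i 0 / b i.
have Epos : forall i j, 0 < E i j by move=> i j; rewrite divr_gt0.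
have upos : forall i, 0 < u i by move=> i; rewrite divr_gt0.
have Erec : forall i j, E i j = (E j i)^-1.
  move=> i j; rewrite /E (proj2 (hA i j)) (proj2 (hB i j)) invf_div invrK.
  by rewrite mulrC.
have eig' : forall i, \sum_j E i j * u j = lam * u i.
  move=> i; have : (A *m w) i 0 = (lam *: w) i 0 by rewrite eig.
  rewrite !mxE => h.
  transitivity ((\sum_j A i j * w j 0) / b i).
    rewrite mulr_suml; apply: eq_bigr => j _; rewrite /E /u Bij.
    have bi := b0 i; have bj := b0 j.
    field; by rewrite !gt_eqF.
  by rewrite h /u mulrA.
have hE0 : forall i j, ~~ [|| (i==i1)&&(j==j1), (i==j1)&&(j==i1), (i==i2)&&(j==j2) | (i==j2)&&(j==i2)] -> E i j = 1.
  move=> i j h; rewrite /E.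
  suff -> : A i j = B i j by rewrite divff // gt_eqF.
  apply/eqP; apply: contraR h => /hdiff [] ->; by rewrite ?orbT.
have Ex : forall i j, A i j != B i j -> E i j != 1.
  by move=> i j; apply: contra => /eqP /divr1_eq ->.
have x1 := Ex _ _ d1.
have y1 := Ex _ _ d2.
apply: eff_strong => // r Hr.
have Hr' : forall i j, E i j <= u i / u j -> r i <= r j.
  move=> i j h; apply: Hr.
  have e1 : u i / u j = (w i 0 / w j 0) / B i j.
    rewrite /u Bij; have bi := b0 i; have bj := b0 j; have wj := pw j.
    field; by rewrite !gt_eqF.
  move: h; rewrite e1 /E ler_pM2r // invr_gt0 //.
suff : strongF E u by move=> S; apply: S.
case: (eqVneq i1 i2) => [e12|n12].
  subst i2.
  have nj : j1 != j2 by apply/negP => /eqP e; apply: ndup; rewrite e !eqxx.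
  exact: (coreB upos Epos Erec eig' n11 n22 nj hE0 x1 y1).
case: (eqVneq i1 j2) => [e1|n1j2].
  subst j2.
  have nj : j1 != i2 by apply/negP => /eqP e; apply: ndup; rewrite e !eqxx orbT.
  apply: (coreB (c := i1) (p := j1) (q := i2) upos Epos Erec eig' n11 n12 nj _ x1 (neq1_inv Erec y1)).
  move=> i j h; apply: hE0; move: h.
  by case: (i==i1); case: (j==j1); case: (i==j1); case: (j==i1); case: (i==i2); case: (j==i2).
case: (eqVneq j1 i2) => [e2|nj1i2].
  subst i2.
  apply: (coreB (c := j1) (p := i1) (q := j2) upos Epos Erec eig' _ n22 n1j2 _ (neq1_inv Erec x1) y1).
  - by rewrite eq_sym.
  - move=> i j h; apply: hE0; move: h.
    by case: (i==i1); case: (j==j1); case: (i==j1); case: (j==i1); case: (i==j2); case: (j==j2).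
case: (eqVneq j1 j2) => [e3|nj1j2].
  subst j2.
  apply: (coreB (c := j1) (p := i1) (q := i2) upos Epos Erec eig' _ _ n12 _ (neq1_inv Erec x1) (neq1_inv Erec y1)).
  - by rewrite eq_sym.
  - by rewrite eq_sym.
  - move=> i j h; apply: hE0; move: h.
    by case: (i==i1); case: (j==j1); case: (i==j1); case: (j==i1); case: (i==i2); case: (j==i2).
apply: (coreA upos Epos Erec eig' n11 n12 nj1i2 _ _ _ hE0 x1 y1).
- by rewrite eq_sym.
- by rewrite eq_sym.
- by rewrite eq_sym.
Qed.
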